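(* Fix integers $N,d\ge1$, a function $v:\{0,1\}^N\to\{0,1\}$ and non-negative weights $(q^{(a)}_{\mathbf{x}})$, defined for $a=v(\mathbf{x})$, with $\sum_{\mathbf{x}}q^{(v(\mathbf{x}))}_{\mathbf{x}}=1$. For a density operator $\rho$ on $\mathbb{C}^N\otimes\mathbb{C}^d$ and a family of controlled unitaries $U_{\mathbf{x}}=\sum_{j=1}^N|j\rangle\langle j|\otimes U_j^{(x_j)}$ (with arbitrary unitaries $U_j^{(0)},U_j^{(1)}$ on $\mathbb{C}^d$), let $$P_W(\rho,U_{\mathbf{x}})=\max_{\{\Pi_0,\Pi_1\}}\Big(\sum_{v(\mathbf{x})=1}q^{(1)}_{\mathbf{x}}\mathrm{Tr}[\Pi_1U_{\mathbf{x}}\rho U_{\mathbf{x}}^\dagger]+\sum_{v(\mathbf{x})=0}q^{(0)}_{\mathbf{x}}\mathrm{Tr}[\Pi_0U_{\mathbf{x}}\rho U_{\mathbf{x}}^\dagger]\Big),$$ the maximum taken over two-outcome POVMs $\{\Pi_0,\Pi_1\}$ on $\mathbb{C}^N\otimes\mathbb{C}^d$. Then the maximum of $P_W(\rho,U_{\mathbf{x}})$ over all such pairs $(\rho,U_{\mathbf{x}})$ can be obtained by a pair of the form $\rho=|\psi\rangle\langle\psi|$ with $|\psi\rangle=\sum_{i=1}^N\sqrt{p_i}\,|i\rangle|\chi\rangle$ for some unit vector $|\chi\rangle\in\mathbb{C}^d$ and some $p_i\ge0$ with $\sum_ip_i=1$, and $U_{\mathbf{x}}=\sum_{i=1}^N|i\rangle\langle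 i|\otimes (U_i)^{x_i}$ for some list of unitaries $(U_1,\dots,U_N)$ on $\mathbb{C}^d$ (so the unitary applied at location $i$ is the identity when $x_i=0$ and $U_i$ when $x_i=1$).
   Context: $\{|1\rangle,\dots,|N\rangle\}$ is the standard orthonormal basis of $\mathbb{C}^N$, modeling $N$ spatial paths of a single particle with a $d$-dimensional internal degree of freedom; bits $x_j$ control the local unitary applied on path $j$. *)

(* Defs.v *)
(* complex numbers C = R[i] over an arbitrary real closed
   field R (covers the usual complex numbers, R = real numbers). *)
From HB Require Import structures.
From mathcomp Require Import all_boot all_order all_algebra.
From mathcomp Require Import complex mxtens.
Set Implicit Arguments. Unset Strict Implicit. Unset Printing Implicit Defensive.
Import Order.TTheory GRing.Theory Num.Theory.
Local Open Scope ring_scope.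

Section QDefs.
Variable R : rcfType.
Local Notation C := (R[i]).

Definition dag m n (A : 'M[C]_(m, n)) : 'M[C]_(n, m) := (map_mx Num.conj A)^T.

Definition hermitian n (A : 'M[C]_n) : Prop := dag A = A.

Definition psd n (A : 'M[C]_n) : Prop :=
  hermitian A /\ forall u : 'cV[C]_n, 0 <= (dag u *m A *m u) 0 0.

Definition density n (rho : 'M[C]_n) : Prop := psd rho /\ \tr rho = 1.

Definition unitary n (U : 'M[C]_n) : Prop := U *m dag U = 1%:M.

Definition povm n (Pi0 Pi1 : 'M[C]_n) : Prop :=
  psd Pi0 /\ psd Pi1 /\ Pi0 + Pi1 = 1%:M.

Definition ket N (j : 'I_N) : 'cV[C]_N := delta_mx j 0.

Definition ctrlU N d (Us : 'I_N -> bool -> 'M[C]_d) (x : {ffun 'I_N -> bool})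
  : 'M[C]_(N * d) :=
  \sum_(j < N) (ket j *m dag (ket j)) *t Us j (x j).

(* the figure of merit for a fixed POVM {Pi0, Pi1} *)
Definition score N d (v : {ffun 'I_N -> bool} -> bool)
  (q : {ffun 'I_N -> bool} -> C) (rho : 'M[C]_(N * d))
  (Us : 'I_N -> bool -> 'M[C]_d) (Pi0 Pi1 : 'M[C]_(N * d)) : C :=
  \sum_(x : {ffun 'I_N -> bool})
     q x * \tr ((if v x then Pi1 else Pi0)
                *m (ctrlU Us x *m rho *m dag (ctrlU Us x))).

Definition special_psi N d (p : 'I_N -> R) (chi : 'cV[C]_d) : 'cV[C]_(N * d) :=
  \sum_(i < N) ((Num.sqrt (p i))%:C)%C *: (ket i *t chi).

Definition special_U N d (Ul : 'I_N -> 'M[C]_d) : 'I_N -> bool -> 'M[C]_d :=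
  fun i b => if b then Ul i else 1%:M.

End QDefs.

(* Main.v *)
Set Warnings "-notation-overridden,-ambiguous-paths".
Require Import Defs.
From HB Require Import structures.
From mathcomp Require Import all_boot all_order all_algebra.
From mathcomp Require Import complex mxtens.
From mathcomp Require Import ring.
Import Order.TTheory GRing.Theory Num.Theory.
Set Implicit Arguments. Unset Strict Implicit. Unset Printing Implicit Defensive.
Local Open Scope ring_scope.

Section Q.
Variable R : rcfType.
Local Notation C := (R[i]).
Local Notation ket := (ket R).

Lemma dagE m n (A : 'M[C]_(m, n)) i j : dag A i j = (A j i)^*.
Proof. by rewrite /dag !mxE. Qed.

Lemma dagK m n (A : 'M[C]_(m, n)) : dag (dag A) = A.
Proof. by apply/matrixP=> i j; rewrite !dagE conjCK. Qed.

Lemma dag_mul m n p (A : 'M[C]_(m, n)) (B : 'M[C]_(n, p)) :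
  dag (A *m B) = dag B *m dag A.
Proof.
apply/matrixP=> i j; rewrite dagE !mxE rmorph_sum; apply: eq_bigr => k _.
by rewrite !dagE rmorphM mulrC.
Qed.

Lemma dagD m n (A B : 'M[C]_(m, n)) : dag (A + B) = dag A + dag B.
Proof. by apply/matrixP=> i j; rewrite !(dagE, mxE) rmorphD. Qed.

Lemma dagZ m n c (A : 'M[C]_(m, n)) : dag (c *: A) = c^* *: dag A.
Proof. by apply/matrixP=> i j; rewrite !(dagE, mxE) rmorphM. Qed.

Lemma dag_sum m n (I : finType) (F : I -> 'M[C]_(m, n)) :
  dag (\sum_i F i) = \sum_i dag (F i).
Proof.
apply/matrixP=> i j; rewrite dagE !summxE rmorph_sum; apply: eq_bigr => k _.
by rewrite dagE.
Qed.

Lemma dag1 n : dag (1%:M : 'M[C]_n) = 1%:M.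
Proof. by apply/matrixP=> i j; rewrite dagE !mxE eq_sym; case: (_ == _); rewrite ?conjC1 ?conjC0. Qed.

Lemma dag_delta m n (i : 'I_m) (j : 'I_n) : dag (delta_mx i j : 'M[C]_(m,n)) = delta_mx j i.
Proof.
by apply/matrixP=> a b; rewrite dagE !mxE; case: (_ == _); case: (_ == _); rewrite /= ?conjC1 ?conjC0.
Qed.

Lemma dag_tens m n p q (A : 'M[C]_(m, n)) (B : 'M[C]_(p, q)) :
  dag (A *t B) = dag A *t dag B.
Proof.
apply/matrixP=> i j.
case: (mxtens_indexP i) => [a b]; case: (mxtens_indexP j) => [c e].
by rewrite dagE !tensmxE !dagE rmorphM.
Qed.

Lemma dag_tmx n (A : 'M[C]_n) : (A ^t* )%sesqui = dag A.
Proof. by apply/matrixP=> i j; rewrite dagE !mxE. Qed.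


Definition bd N d (A : 'I_N -> 'M[C]_d) : 'M[C]_(N * d) :=
  \sum_(i < N) (delta_mx i i : 'M[C]_N) *t A i.

Lemma ket_proj N (j : 'I_N) : ket j *m dag (ket j) = delta_mx j j :> 'M[C]_N.
Proof. by rewrite /ket dag_delta mul_delta_mx. Qed.

Lemma ctrlU_bd N d (Us : 'I_N -> bool -> 'M[C]_d) x :
  ctrlU Us x = bd (fun j => Us j (x j)).
Proof. by rewrite /ctrlU /bd; apply: eq_bigr => j _; rewrite ket_proj. Qed.

Lemma tens_mulrn m n p q (A : 'M[C]_(m, n)) (B : 'M[C]_(p, q)) (b : bool) :
  (A *+ b) *t B = (A *t B) *+ b.
Proof. by case: b; rewrite ?mulr1n ?mulr0n ?tens0mx. Qed.

Lemma bd_mul N d (A B : 'I_N -> 'M[C]_d) : bd A *m bd B = bd (fun i => A i *m B i).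
Proof.
rewrite /bd mulmx_suml; apply: eq_bigr => i _.
rewrite mulmx_sumr (bigD1 i) //= big1 ?addr0.
  by rewrite tensmx_mul mul_delta_mx.
by move=> j ji; rewrite tensmx_mul mul_delta_mx_cond tens_mulrn eq_sym (negbTE ji) mulr0n.
Qed.

Lemma bd_dag N d (A : 'I_N -> 'M[C]_d) : dag (bd A) = bd (fun i => dag (A i)).
Proof. by rewrite /bd dag_sum; apply: eq_bigr => i _; rewrite dag_tens dag_delta. Qed.

Lemma bd_ket N d (A : 'I_N -> 'M[C]_d) j (x : 'cV[C]_d) :
  bd A *m (ket j *t x) = ket j *t (A j *m x).
Proof.
rewrite /bd /ket mulmx_suml (bigD1 j) //= big1 ?addr0.
  by rewrite tensmx_mul mul_delta_mx.
by move=> i ij; rewrite tensmx_mul mul_delta_mx_cond tens_mulrn (negbTE ij) mulr0n.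
Qed.

Lemma bdE N d (A : 'I_N -> 'M[C]_d) a b c e :
  bd A (mxtens_index (a, b)) (mxtens_index (c, e)) = (a == c)%:R * A a b e.
Proof.
rewrite /bd summxE (bigD1 a) //= big1 ?addr0.
  by rewrite tensmxE !mxE eqxx /= eq_sym.
by move=> i ia; rewrite tensmxE !mxE eq_sym (negbTE ia) mul0r.
Qed.

Lemma bd1 N d : bd (fun _ : 'I_N => 1%:M : 'M[C]_d) = 1%:M.
Proof.
apply/matrixP=> i j.
case: (mxtens_indexP i) => [a b]; case: (mxtens_indexP j) => [c e].
rewrite bdE !mxE (inj_eq (can_inj (@mxtens_indexK _ _))) xpair_eqE.
by case: (a == c); rewrite ?mul1r ?mul0r.
Qed.

Lemma unitary_bd N d (A : 'I_N -> 'M[C]_d) : (forall i, unitary (A i)) -> unitary (bd A).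
Proof.
move=> hA; rewrite /unitary bd_dag bd_mul -(@bd1 N d) /bd.
by apply: eq_bigr => i _; rewrite hA.
Qed.


Lemma tr11 (M : 'M[C]_1) : \tr M = M 0 0.
Proof. by rewrite /mxtrace big_ord1. Qed.

Lemma tr_pure n (M U : 'M[C]_n) (w : 'cV[C]_n) :
  \tr (M *m (U *m (w *m dag w) *m dag U)) = (dag (U *m w) *m M *m (U *m w)) 0 0.
Proof.
rewrite dag_mul !mulmxA -[M *m U *m w *m dag w *m dag U]mulmxA -dag_mul.
by rewrite mxtrace_mulC tr11 !mulmxA.
Qed.

Lemma psd_quad n (M : 'M[C]_n) (u : 'cV[C]_n) : psd M -> 0 <= (dag u *m M *m u) 0 0.
Proof. by case=> _ ->. Qed.

Lemma score_pure_ge0 N d v (q : {ffun 'I_N -> bool} -> C) (Us : 'I_N -> bool -> 'M[C]_d)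
  Pi0 Pi1 (w : 'cV[C]_(N * d)) :
  (forall x, 0 <= q x) -> povm Pi0 Pi1 ->
  0 <= score v q (w *m dag w) Us Pi0 Pi1.
Proof.
move=> hq [h0 [h1 _]]; rewrite /score; apply: sumr_ge0 => x _.
apply: mulr_ge0 => //; rewrite tr_pure.
by case: (v x); apply: psd_quad.
Qed.

Lemma tr_sum n (I : finType) (F : I -> 'M[C]_n) : \tr (\sum_i F i) = \sum_i \tr (F i).
Proof.
rewrite /mxtrace; under eq_bigr do rewrite summxE.
by rewrite exchange_big.
Qed.

Lemma score_lin N d v (q : {ffun 'I_N -> bool} -> C) (Us : 'I_N -> bool -> 'M[C]_d)
  Pi0 Pi1 (I : finType) (c : I -> C) (X : I -> 'M[C]_(N * d)) :
  score v q (\sum_k c k *: X k) Us Pi0 Pi1 = \sum_k c k * score v q (X k) Us Pi0 Pi1.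
Proof.
rewrite /score; under [RHS]eq_bigr do rewrite mulr_sumr.
rewrite exchange_big; apply: eq_bigr => x _.
rewrite mulmx_sumr mulmx_suml mulmx_sumr tr_sum mulr_sumr; apply: eq_bigr => k _.
by rewrite -scalemxAr -scalemxAl -scalemxAr mxtraceZ mulrCA.
Qed.

Lemma exists_max (T : finType) (t0 : T) (g : T -> C) :
  (forall t, g t \is Num.real) -> exists k, forall j, g j <= g k.
Proof.
move=> hr.
suff [k hk] : exists k, forall j, j \in enum T -> g j <= g k.
  by exists k => j; apply: hk; rewrite mem_enum.
elim: (enum T) => [|a s [k hk]]; first by exists t0.
have /orP [hak|hka] := real_leVge (hr a) (hr k).
  by exists k => j; rewrite inE => /orP [/eqP -> //|]; apply: hk.
exists a => j; rewrite inE => /orP [/eqP -> //|/hk hj].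
exact: le_trans hj hka.
Qed.

Lemma diag_entry n (M : 'M[C]_n) k : (delta_mx (0 : 'I_1) k *m M *m delta_mx k (0 : 'I_1)) 0 0 = M k k.
Proof. by rewrite -rowE -colE !mxE. Qed.

Lemma mixed_to_pure N d v (q : {ffun 'I_N -> bool} -> C) (Us : 'I_N -> bool -> 'M[C]_d)
  Pi0 Pi1 (rho : 'M[C]_(N * d)) :
  (0 < N * d)%N -> (forall x, 0 <= q x) -> povm Pi0 Pi1 -> density rho ->
  exists u : 'cV[C]_(N * d), (dag u *m u) 0 0 = 1 /\
    score v q rho Us Pi0 Pi1 <= score v q (u *m dag u) Us Pi0 Pi1.
Proof.
move=> hn hq hP [[hh hpsd] htr].
have hnorm : rho \is normalmx by rewrite qualifE dag_tmx hh.
have := orthomx_spectralP hnorm.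
set P := spectralmx rho; set D := spectral_diag rho.
have hU : P *m dag P = 1%:M by rewrite -dag_tmx; apply/unitarymxP/spectral_unitarymx.
have hU' : dag P *m P = 1%:M by apply: mulmx1C.
rewrite invmx_unitary ?spectral_unitarymx // dag_tmx => hrho.
pose u k := dag P *m delta_mx k (0 : 'I_1).
have hdu k : dag (u k) = delta_mx 0 k *m P by rewrite dag_mul dagK dag_delta.
have hPrho : P *m rho *m dag P = diag_mx D.
  by rewrite hrho !mulmxA hU mul1mx -mulmxA hU mulmx1.
have hD k : D 0 k = (dag (u k) *m rho *m u k) 0 0.
  by rewrite hdu /u !mulmxA -(mulmxA _ P rho) -(mulmxA _ (P *m rho)) hPrho diag_entry mxE eqxx mulr1n.
have hrhoE : rho = \sum_k D 0 k *: (u k *m dag (u k)).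
  rewrite {1}hrho diag_mx_sum_delta mulmx_sumr mulmx_suml; apply: eq_bigr => k _.
  by rewrite -scalemxAr -scalemxAl hdu /u !mulmxA -(mulmxA _ (delta_mx k 0)) mul_delta_mx.
have hsum : \sum_k D 0 k = 1.
  rewrite -mxtrace_diag -hPrho mxtrace_mulC mulmxA hU' mul1mx; exact: htr.
have ht0 : 'I_(N * d) by exact: Ordinal hn.
have [k hk] := @exists_max _ ht0 (fun k => score v q (u k *m dag (u k)) Us Pi0 Pi1)
  (fun t => ger0_real (score_pure_ge0 v Us (u t) hq hP)).
exists (u k); split.
  by rewrite hdu /u !mulmxA -(mulmxA _ P) hU mulmx1 mul_delta_mx mxE !eqxx.
rewrite {1}hrhoE score_lin.
apply: le_trans (_ : \sum_j D 0 j * score v q (u k *m dag (u k)) Us Pi0 Pi1 <= _).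
  apply: ler_sum => j _; apply: ler_wpM2l => //.
  by rewrite hD; apply: psd_quad.
by rewrite -mulr_suml hsum mul1r.
Qed.


Lemma entryD m n (A B : 'M[C]_(m, n)) i j : (A + B) i j = A i j + B i j.
Proof. by rewrite mxE. Qed.
Lemma entryN m n (A : 'M[C]_(m, n)) i j : (- A) i j = - A i j.
Proof. by rewrite mxE. Qed.
Lemma entryB m n (A B : 'M[C]_(m, n)) i j : (A - B) i j = A i j - B i j.
Proof. by rewrite entryD entryN. Qed.
Lemma entryZ m n c (A : 'M[C]_(m, n)) i j : (c *: A) i j = c * A i j.
Proof. by rewrite mxE. Qed.
Lemma dagN m n (A : 'M[C]_(m, n)) : dag (- A) = - dag A.
Proof. by apply/matrixP=> i j; rewrite !(dagE, mxE) rmorphN. Qed.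
Lemma dagB m n (A B : 'M[C]_(m, n)) : dag (A - B) = dag A - dag B.
Proof. by rewrite dagD dagN. Qed.

Lemma norm0 n (x : 'cV[C]_n) : (dag x *m x) 0 0 = 0 -> x = 0.
Proof.
rewrite mxE => h; apply/matrixP => r c; rewrite (ord1 c) mxE.
have /psumr_eq0P hr : \sum_j (x j 0 * (x j 0)^*) = 0.
  by rewrite -[RHS]h; apply: eq_bigr => j _; rewrite dagE mulrC.
by apply/eqP; rewrite -mul_conjC_eq0; apply/eqP/hr => // j _; apply: mul_conjC_ge0.
Qed.

Lemma conjM (x y : C) : (x * y)^* = x^* * y^*.
Proof. exact: rmorphM. Qed.
Lemma conjV (x : C) : (x^-1)^* = (x^*)^-1.
Proof. exact: fmorphV. Qed.
Lemma conjB (x y : C) : (x - y)^* = x^* - y^*.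
Proof. exact: rmorphB. Qed.
Lemma conjD (x y : C) : (x + y)^* = x^* + y^*.
Proof. exact: rmorphD. Qed.
Lemma conjn k : (k%:R : C)^* = k%:R.
Proof. exact: rmorph_nat. Qed.

Lemma phase_exists (al : C) : exists ph : C, ph * ph^* = 1 /\ (ph^* * al)^* = ph^* * al.
Proof.
have [->|h0] := eqVneq al 0.
  by exists 1; rewrite conjC1 mulr1 mulr0 conjC0.
have hn : `|al| != 0 by rewrite normr_eq0.
exists (al / `|al|); rewrite conjM conjV conj_normC; split.
  by rewrite mulrACA -normCK; field.
have -> : al^* / `|al| * al = `|al|.
  by rewrite mulrAC [al^* * al]mulrC -normCK; field.
exact: conj_normC.
Qed.


Lemma householder d (i0 : 'I_d) (a : 'cV[C]_d) : (dag a *m a) 0 0 = 1 ->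
  exists W : 'M[C]_d, unitary W /\ W *m delta_mx i0 0 = a.
Proof.
move=> ha; have [ph [hph hre]] := phase_exists (a i0 0).
pose e0 : 'cV[C]_d := delta_mx i0 0.
pose b := ph^* *: a. pose w := e0 - b. pose c := (dag w *m w) 0 0.
pose P := w *m dag w.
pose H := 1%:M - (2 / c) *: P.
have hbb : (dag b *m b) 0 0 = 1.
  by rewrite /b dagZ conjCK -scalemxAl -scalemxAr !entryZ ha mulr1 hph.
pose be := b i0 0.
have hbe : be^* = be by rewrite /be entryZ.
have he0b : (dag e0 *m b) 0 0 = be by rewrite /e0 dag_delta -rowE mxE.
have hbe0 : (dag b *m e0) 0 0 = be^*.
  by rewrite -[dag b *m e0]dagK dag_mul dagK dagE he0b.
have he0e0 : (dag e0 *m e0) 0 0 = 1 by rewrite /e0 dag_delta mul_delta_mx mxE !eqxx.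
have hc : c = 2 - 2 * be.
  rewrite /c /w dagB mulmxBl !mulmxBr !entryB he0e0 he0b hbe0 hbb hbe; ring.
have hwe0 : (dag w *m e0) 0 0 = 1 - be.
  by rewrite /w dagB mulmxBl entryB he0e0 hbe0 hbe.
have hHe0 : H *m e0 = b.
  rewrite /H /P mulmxBl mul1mx -scalemxAl -mulmxA (mx11_scalar (dag w *m e0)) hwe0.
  rewrite mul_mx_scalar scalerA.
  have [hc0|hc0] := eqVneq c 0.
    have hw0 : w = 0 by apply: norm0.
    have hb : e0 = b by apply/eqP; rewrite -subr_eq0; apply/eqP.
    by rewrite hw0 scaler0 subr0.
  have -> : 2 / c * (1 - be) = 1.
    move: hc0; rewrite hc => hc0.
    field; exact: hc0.
  by rewrite scale1r /w opprB addrC subrK.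
have hcr : c^* = c by rewrite hc conjB conjM hbe conjn.
have hdH : dag H = H.
  by rewrite /H /P dagB dag1 dagZ dag_mul dagK conjM conjV conjn hcr.
have hPP : P *m P = c *: P.
  rewrite /P mulmxA -(mulmxA w (dag w) w) (mx11_scalar (dag w *m w)).
  by rewrite mul_mx_scalar -scalemxAl.
have hk : 2 / c * (2 / c) * c = 2 / c + 2 / c.
  have [->|hc0] := eqVneq c 0; first by rewrite invr0 !mulr0 addr0.
  by field.
have hH : unitary H.
  rewrite /unitary hdH /H mulmxBl !mulmxBr mul1mx mulmx1 -scalemxAl -scalemxAr.
  rewrite mul1mx -scalemxAr hPP !scalerA hk scalerDl; apply/matrixP => i j; rewrite !(entryB, entryD, entryZ).
  by ring.
exists (ph *: H); split.
  by rewrite /unitary dagZ -scalemxAl -scalemxAr scalerA hph scale1r.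
by rewrite -scalemxAl hHe0 /b scalerA hph scale1r.
Qed.


Lemma norm_ge0 n (x : 'cV[C]_n) : 0 <= (dag x *m x) 0 0.
Proof.
rewrite mxE; apply: sumr_ge0 => j _; rewrite dagE mulrC; exact: mul_conjC_ge0.
Qed.

Lemma realcM (x y : R) : ((x * y)%:C = x%:C * y%:C)%C.
Proof. exact: rmorphM. Qed.

Lemma local_unitary d (i0 : 'I_d) (phi : 'cV[C]_d) : exists W : 'M[C]_d, unitary W /\
  ((Num.sqrt (complex.Re ((dag phi *m phi) 0 0)))%:C)%C *: (W *m delta_mx i0 0) = phi.
Proof.
have hn0 := norm_ge0 phi.
have [hn|hn] := eqVneq ((dag phi *m phi) 0 0) 0.
  exists 1%:M; split; first by rewrite /unitary dag1 mulmx1.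
  by rewrite hn (norm0 hn) /= sqrtr0 scale0r.
set n := (dag phi *m phi) 0 0 in hn0 hn *.
have hpr : ((complex.Re n)%:C)%C = n by apply: RRe_real; apply: ger0_real.
have hpr0 : 0 <= complex.Re n by rewrite -ler0c hpr.
set s := ((Num.sqrt (complex.Re n))%:C)%C.
have hs2 : s * s = n by rewrite /s -realcM -expr2 sqr_sqrtr.
have hs0 : s != 0 by apply: contraNneq hn => h; rewrite -hs2 h mul0r.
have hsr : s^* = s by apply/CrealP/ger0_real; rewrite /s ler0c sqrtr_ge0.
have hh : (dag (s^-1 *: phi) *m (s^-1 *: phi)) 0 0 = 1.
  rewrite dagZ -scalemxAl -scalemxAr !entryZ conjV hsr.
  rewrite -/n -hs2; field; exact: hs0.
have [W [hW hWe]] := householder i0 hh.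
by exists W; split => //; rewrite hWe scalerA mulfV // scale1r.
Qed.

Definition comp N d (psi : 'cV[C]_(N * d)) (i : 'I_N) : 'cV[C]_d :=
  \col_(r < d) psi (mxtens_index (i, r)) 0.

Lemma idx00 : mxtens_index ((0 : 'I_1), (0 : 'I_1)) = 0.
Proof. exact: val_inj. Qed.

Lemma tensE_cV m p (A : 'cV[C]_m) (B : 'cV[C]_p) a b :
  (A *t B : 'cV_(m * p)) (mxtens_index (a,b)) 0 = A a 0 * B b 0.
Proof.
have := tensmxE A B a b 0 0.
have -> : mxtens_index ((0 : 'I_1), (0 : 'I_1)) = 0 by exact: val_inj.
by move=> <-.
Qed.

Lemma psi_decomp N d (psi : 'cV[C]_(N * d)) : psi = \sum_i ket i *t comp psi i.
Proof.
apply/matrixP=> i j.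
case: (mxtens_indexP i) => [a b]; rewrite (ord1 j).
rewrite summxE (bigD1 a) //= big1 ?addr0.
  by rewrite tensE_cV !mxE !eqxx mul1r.
by move=> k ka; rewrite tensE_cV !mxE eq_sym (negbTE ka) mul0r.
Qed.


Lemma norm_decomp N d (psi : 'cV[C]_(N * d)) :
  (dag psi *m psi) 0 0 = \sum_i (dag (comp psi i) *m comp psi i) 0 0.
Proof.
rewrite mxE (reindex (@mxtens_index N d)) /=; last first.
  exact: onW_bij (Bijective (@mxtens_indexK _ _) (@mxtens_unindexK _ _)).
under [RHS]eq_bigr do rewrite mxE.
rewrite pair_bigA /=; apply: eq_bigr => [[i r]] _ /=.
by rewrite !dagE !mxE.
Qed.

Lemma tensmxZr m n p q c (A : 'M[C]_(m, n)) (B : 'M[C]_(p, q)) :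
  A *t (c *: B) = c *: (A *t B).
Proof.
apply/matrixP=> i j.
case: (mxtens_indexP i) => [a b]; case: (mxtens_indexP j) => [e f].
by rewrite entryZ !tensmxE entryZ mulrCA.
Qed.

Lemma tensmxZr_cV m p c (A : 'cV[C]_m) (B : 'cV[C]_p) :
  (A *t (c *: B) : 'cV_(m * p)) = c *: (A *t B : 'cV_(m * p)).
Proof.
apply/matrixP=> i j; rewrite (ord1 j).
case: (mxtens_indexP i) => [a b].
by rewrite entryZ !tensE_cV entryZ mulrCA.
Qed.

Lemma eq_bd N d (A B : 'I_N -> 'M[C]_d) : (forall i, A i = B i) -> bd A = bd B.
Proof. by move=> h; rewrite /bd; apply: eq_bigr => i _; rewrite h. Qed.

Lemma unitaryC n (U : 'M[C]_n) : unitary U -> dag U *m U = 1%:M.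
Proof. exact: mulmx1C. Qed.

Lemma psd_conj n (V M : 'M[C]_n) : psd M -> psd (dag V *m M *m V).
Proof.
move=> [hh hq]; split.
  by rewrite /Defs.hermitian !dag_mul dagK hh mulmxA.
move=> u; have -> : dag u *m (dag V *m M *m V) *m u = dag (V *m u) *m M *m (V *m u).
  by rewrite dag_mul !mulmxA.
exact: hq.
Qed.

End Q.

Unset Implicit Arguments.

Theorem lemma2 (R : rcfType) (N d : nat) (hN : (0 < N)%N) (hd : (0 < d)%N)
  (v : {ffun 'I_N -> bool} -> bool) (q : {ffun 'I_N -> bool} -> R[i])
  (hq : forall x, 0 <= q x) (hqsum : \sum_x q x = 1)
  (rho : 'M[R[i]]_(N * d)) (Us : 'I_N -> bool -> 'M[R[i]]_d)
  (Pi0 Pi1 : 'M[R[i]]_(N * d)) :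
  density rho -> (forall j b, unitary (Us j b)) -> povm Pi0 Pi1 ->
  exists (p : 'I_N -> R) (chi : 'cV[R[i]]_d) (Ul : 'I_N -> 'M[R[i]]_d)
         (Pi0' Pi1' : 'M[R[i]]_(N * d)),
    [/\ (forall i, 0 <= p i) /\ \sum_i p i = 1,
        (dag chi *m chi) 0 0 = 1,
        (forall i, unitary (Ul i)),
        povm Pi0' Pi1' &
        score v q rho Us Pi0 Pi1 <=
        score v q (special_psi p chi *m dag (special_psi p chi))
              (special_U Ul) Pi0' Pi1'].
Proof.
move=> hrho hU hP.
have hn : (0 < N * d)%N by rewrite muln_gt0 hN hd.
have [psi [hpsi hle]] := mixed_to_pure v Us hn hq hP hrho.
pose i0 : 'I_d := Ordinal hd.
pose e0 : 'cV[R[i]]_d := delta_mx i0 0.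
pose p i := complex.Re ((dag (comp psi i) *m comp psi i) 0 0).
have [W hW] := fin_all_exists (fun i => local_unitary i0 (comp psi i)).
pose Ul i := dag (W i) *m dag (Us i false) *m Us i true *m W i.
pose V := bd (fun i => Us i false *m W i).
have hVu : unitary V.
  apply: unitary_bd => i; rewrite /unitary dag_mul !mulmxA.
  by rewrite -(mulmxA _ (W i)) (proj1 (hW i)) mulmx1 (hU i false).
have hpsi_eq : psi = bd W *m special_psi p e0.
  rewrite {1}(psi_decomp psi) /special_psi mulmx_sumr; apply: eq_bigr => i _.
  by rewrite -scalemxAr bd_ket -tensmxZr_cV (proj2 (hW i)).
have hUx x : ctrlU Us x *m psi = V *m (ctrlU (special_U Ul) x *m special_psi p e0).
  rewrite hpsi_eq !ctrlU_bd !mulmxA bd_mul /V bd_mul; congr (_ *m _); apply: eq_bd => i.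
  rewrite /special_U; case: (x i); last by rewrite mulmx1.
  rewrite /Ul !mulmxA -(mulmxA _ (W i) (dag (W i))) (proj1 (hW i)) mulmx1 (hU i false).
  by rewrite mul1mx.
have hpC i : ((p i)%:C)%C = (dag (comp psi i) *m comp psi i) 0 0.
  by apply: RRe_real; apply: ger0_real; apply: norm_ge0.
exists p, e0, Ul, (dag V *m Pi0 *m V), (dag V *m Pi1 *m V); split.
- split.
    by move=> i; rewrite -ler0c hpC; apply: norm_ge0.
  apply: (@complexI R); rewrite rmorph_sum rmorph1 /=.
  under eq_bigr do rewrite hpC.
  by rewrite -norm_decomp.
- by rewrite /e0 dag_delta mul_delta_mx mxE !eqxx.
- move=> i; rewrite /unitary /Ul !dag_mul !dagK !mulmxA.
  rewrite -(mulmxA _ (W i) (dag (W i))) (proj1 (hW i)) mulmx1.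
  rewrite -(mulmxA _ (Us i true) (dag (Us i true))) (hU i true) mulmx1.
  rewrite -(mulmxA _ (dag (Us i false)) (Us i false)) (unitaryC (hU i false)) mulmx1.
  exact: unitaryC (proj1 (hW i)).
- case: hP => h0 [h1 hs]; split; [exact: psd_conj | split; [exact: psd_conj|]].
  by rewrite -mulmxDl -mulmxDr hs mulmx1 (unitaryC hVu).
apply: (le_trans hle); rewrite le_eqVlt; apply/orP; left; apply/eqP.
rewrite /score; apply: eq_bigr => x _; rewrite !tr_pure hUx.
by congr (_ * _); case: (v x); rewrite dag_mul !mulmxA.
Qed.
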